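(* Suppose $V:\mathbb R^2\to\mathbb R$ satisfies $(V_0)$ and $(V_2)$. Then $(\nabla V(x),x)\ge0$ for all $x\in\mathbb R^2$.
   Context: Condition $(V_0)$: $V\in L^1_{loc}(\mathbb R^2)$, $V_0:=\inf_{\mathbb R^2}V>0$, and the Lebesgue measure of $\{x\in\mathbb R^2: V(x)\le M\}$ is finite for every $M>0$. Condition $(V_2)$: $V\in C^1(\mathbb R^2,\mathbb R)$ and, with $\mathcal V(x):=V(x)-\frac12(\nabla V(x),x)$, for every $x\in\mathbb R^2$ the function $t\mapsto\mathcal V(tx)$ is nondecreasing on $(0,\infty)$. *)

(* Defs.v *)
From HB Require Import structures.
From mathcomp Require Import all_boot all_order all_algebra.
From mathcomp Require Import all_classical all_reals all_analysis.
Set Implicit Arguments. Unset Strict Implicit. Unset Printing Implicit Defensive.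
Import Order.TTheory GRing.Theory Num.Theory.
Import numFieldNormedType.Exports.
Local Open Scope classical_set_scope.
Local Open Scope ring_scope.

Definition lebesgue2 {R : realType} : set (R * R) -> \bar R :=
  (@lebesgue_measure R \x @lebesgue_measure R)%E.

Definition locally_integrable {R : realType} (V : R * R -> R) : Prop :=
  measurable_fun setT V /\
  forall K : set (R * R), compact K -> (@lebesgue2 R).-integrable K (EFin \o V).

Definition cond_V0 {R : realType} (V : R * R -> R) : Prop :=
  [/\ locally_integrable V,
      0 < inf (range V)
    & forall M : R, 0 < M -> (@lebesgue2 R [set x | (V x <= M)%R] < +oo)%E].

(* (nabla V(x), y) is the differential of V at x applied to y. *)
Definition gradV {R : realType} (V : R * R -> R) (x y : R * R) : R := 'd V x y.

(* V in C^1(R^2, R): differentiable everywhere, with continuous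
   directional derivatives x |-> (nabla V(x), v) for every direction v
   (equivalently, continuous partial derivatives). *)
Definition C1 {R : realType} (V : R * R -> R) : Prop :=
  (forall x, differentiable V x) /\
  (forall v : R * R, continuous (fun x => gradV V x v)).

Definition calV {R : realType} (V : R * R -> R) (x : R * R) : R :=
  V x - 2^-1 * gradV V x x.

Definition cond_V2 {R : realType} (V : R * R -> R) : Prop :=
  C1 V /\
  forall (x : R * R) (s t : R), 0 < s -> s <= t ->
    calV V (s *: x) <= calV V (t *: x).

(* Main.v *)
Require Import Defs.
From HB Require Import structures.
From mathcomp Require Import all_boot all_order all_algebra.
From mathcomp Require Import all_classical all_reals all_analysis.
From mathcomp Require Import lra.
Import Order.TTheory GRing.Theory Num.Theory.
Import numFieldNormedType.Exports.
Local Open Scope ring_scope.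

Lemma dg (R : realType) (V : R * R -> R) (x : R * R) (t : R) :
  (forall y, differentiable V y) ->
  is_derive t 1 (fun s : R => V (s *: x)) (gradV V (t *: x) x).
Proof.
move=> dV.
have hd : differentiable (V \o ( *:%R^~ x)) t.
  apply: differentiable_comp => //.
apply: DeriveDef; first exact: diff_derivable.
rewrite deriveE // diff_comp //= diff_val /= scale1r.
by [].
Qed.

Lemma dinv (R : realType) (t : R) : t != 0 -> is_derive t 1 (fun y : R => y^-1) (- t ^-2).
Proof.
move=> t0.
apply: DeriveDef; first exact: (@derivableV _ _ id).
by rewrite (@deriveV _ _ id) // derive_id /= [_ *: 1]mulr1.
Qed.

Lemma arith (R : realType) (G : R -> R) (h1 d1 : R) : d1 < 0 -> (forall y, 0 < G y) ->
  (forall y, 1 <= y -> (G y - h1) * (y^-1)^+2 <= 2^-1 * d1) -> False.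
Proof.
move=> dneg pos H.
pose c : R := - d1 / 2.
have c0 : 0 < c by rewrite /c; lra.
pose y : R := 1 + `|h1| / c.
have hc : 0 <= `|h1| / c by apply: divr_ge0 => //; exact: ltW.
have y1 : 1 <= y by rewrite /y; lra.
have y0 : 0 < y by lra.
have yu : y^-1 * y = 1 by rewrite mulVf // gt_eqF.
have gy := pos y.
have cy : c * y = c + `|h1|.
  by rewrite /y mulrDr mulr1 mulrCA divff ?mulr1 // gt_eqF.
have ab := ler_norm h1.
have H2 : G y - h1 <= (2^-1 * d1) * y ^+ 2.
  have K := ler_wpM2r (sqr_ge0 y) (H y y1).
  have E : (G y - h1) * y^-1 ^+ 2 * y ^+ 2 = G y - h1.
    by rewrite -mulrA -(exprMn 2 (y^-1) y) yu expr1n mulr1.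
  by rewrite E in K.
have e : 2^-1 * d1 = - c by rewrite /c; lra.
rewrite e in H2.
have : c * y <= c * y ^+ 2.
  by rewrite expr2 mulrA ler_peMr // mulr_ge0 // ltW.
nra.
Qed.

Lemma Vpos (R : realType) (V : R * R -> R) : cond_V0 V -> forall y, 0 < V y.
Proof.
case=> _ hinf _ y.
have hi : has_inf (range V).
  apply: contrapT => /inf_out h; by rewrite h ltxx in hinf.
apply: (lt_le_trans hinf); apply: (ge_inf hi.2); by exists y.
Qed.

Theorem lemma5p1 (R : realType) (V : R * R -> R) :
  cond_V0 V -> cond_V2 V -> forall x : R * R, 0 <= gradV V x x.
Proof.
move=> h0 [[dV _] hmon] x.
have pos := @Vpos _ _ h0.
set g := fun s : R => V (s *: x).
set d := fun s : R => gradV V (s *: x) x.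
have hcal t : calV V (t *: x) = g t - 2^-1 * (t * d t).
  rewrite /calV /gradV /g /d; congr (_ - _ * _); exact: linearZ.
set h1 := calV V (1 *: x).
have hge t : 1 <= t -> h1 <= g t - 2^-1 * (t * d t).
  by move=> t1; rewrite -hcal; apply: hmon.
pose q := fun y : R => y^-1.
pose F : R -> R := (g \- cst h1) * q ^+ 2.
have dF (t : R) : 0 < t -> is_derive t 1 F
   ((g t - h1) *: ((2%:R * q t ^+ 1) *: (- t ^-2)) + q t ^+ 2 *: (d t - 0)).
  move=> t0.
  have := @is_deriveM _ _ (g \- cst h1) (q ^+ 2) t 1 (d t - 0) ((2%:R * q t ^+ 1) *: (- t ^-2)).
  apply.
    apply: is_deriveB; first exact: dg.
  apply: is_deriveX; apply: dinv; by rewrite gt_eqF.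
have Fnincr : forall y, 1 <= y -> F y <= F 1.
  move=> y y1.
  apply: (@ler0_derive1_nincry _ F 1) => //.
  - move=> t; rewrite in_itv /= andbT => t1.
    have /dF [] : 0 < t by apply: lt_trans t1.
    by [].
  - move=> t; rewrite in_itv /= andbT => t1.
    have t0 : 0 < t by apply: lt_trans t1.
    rewrite derive1E (@derive_val _ _ _ _ _ _ _ (dF t t0)).
    have := hge t (ltW t1).
    rewrite /q /= subr0 expr1 -exprVn.
    set u := t^-1; set A := g t; set D := d t.
    have ut : u * t = 1 by rewrite /u mulVf // gt_eqF.
    have u0 : 0 < u by rewrite /u invr_gt0.
    move=> hA.
    have k : 0 <= 2 * u * (A - h1) - D.
      have : 0 <= u * (2 * (A - h1) - t * D) by apply: mulr_ge0; [exact: ltW|nra].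
      have e : u * (t * D) = D by rewrite mulrA ut mul1r.
      nra.
    rewrite /GRing.scale /=.
    have : 0 <= u ^+ 2 * (2 * u * (A - h1) - D) by apply: mulr_ge0 => //; exact: sqr_ge0.
    nra.
  - apply: derivable_within_continuous => t; rewrite in_itv /= andbT => t1.
    have /dF [] : 0 < t by apply: lt_le_trans t1.
    by [].
have d1e : gradV V x x = d 1 by rewrite /d scale1r.
rewrite d1e leNgt; apply/negP => dneg.
have Fe (y : R) : F y = (g y - h1) * (y^-1)^+2 by reflexivity.
have F1 : F 1 = 2^-1 * d 1.
  rewrite Fe invr1 expr1n mulr1 /h1 hcal mul1r.
  by rewrite opprB addrCA subrr addr0.
apply: (@arith R g h1 (d 1) dneg (fun y => pos (y *: x))) => y y1.
by rewrite -Fe -F1; apply: Fnincr.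
Qed.
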